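(* Suppose $0\le\alpha_3\le\alpha_2\le\alpha_1\le\pi/4$ and $0\le\alpha_3'\le\alpha_2'\le\alpha_1'\le\pi/4$. Then the two-qubit unitaries $U(\alpha_1,\alpha_2,\alpha_3)$ and $U(\alpha_1',\alpha_2',\alpha_3')$ have the same Schmidt coefficients if and only if either (a) $\alpha_1=\alpha_1'$, $\alpha_2=\alpha_2'$, $\alpha_3=\alpha_3'$; or (b) $\alpha_1=\alpha_1'=\pi/4$ and $\cos(2\alpha_2)\cos(2\alpha_3)=\cos(2\alpha_2')\cos(2\alpha_3')$.
   Context: $U(\alpha_1,\alpha_2,\alpha_3)=\exp[-\mathrm{i}\sum_{k=1}^3\alpha_k\sigma_k\otimes\sigma_k]$ with $\sigma_k$ the Pauli matrices. The Schmidt coefficients of a two-qubit unitary $V$ are the Schmidt coefficients of $(V\otimes I_{A'B'})|\Phi\rangle_{AA'}|\Phi\rangle_{BB'}$, $|\Phi\rangle=(|00\rangle+|11\rangle)/\sqrt2$, with respect to the bipartition $AA'|BB'$. For $U(\alpha_1,\alpha_2,\alpha_3)$ these are $|\zeta_0|,\dots,|\zeta_3|$ with $\zeta_0=\cos\alpha_1\cos\alpha_2\cos\alpha_3-\mathrm{i}\sin\alpha_1\sin\alpha_2\sin\alpha_3$, $\zeta_1=\cos\alpha_1\sin\alpha_2\sin\alpha_3-\mathrm{i}\sin\alpha_1\cos\alpha_2\cos\alpha_3$, $\zeta_2=\sin\alpha_1\cos\alpha_2\sin\alpha_3-\mathrm{i}\cos\alpha_1\sin\alpha_2\cos\alpha_3$,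 $\zeta_3=\sin\alpha_1\sin\alpha_2\cos\alpha_3-\mathrm{i}\cos\alpha_1\cos\alpha_2\sin\alpha_3$. ''Same Schmidt coefficients'' means the same multiset of Schmidt coefficients. *)

(* Defs.v *)
From Stdlib Require Import Reals List Permutation.
From Coquelicot Require Import Coquelicot.
Open Scope R_scope.

(* The complex numbers zeta_0..zeta_3 attached to U(a1,a2,a3)
   (as given in the paper's context): zeta = re - i * im. *)
Definition zeta0 (a1 a2 a3 : R) : C :=
  (cos a1 * cos a2 * cos a3, - (sin a1 * sin a2 * sin a3)).
Definition zeta1 (a1 a2 a3 : R) : C :=
  (cos a1 * sin a2 * sin a3, - (sin a1 * cos a2 * cos a3)).
Definition zeta2 (a1 a2 a3 : R) : C :=
  (sin a1 * cos a2 * sin a3, - (cos a1 * sin a2 * cos a3)).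
Definition zeta3 (a1 a2 a3 : R) : C :=
  (sin a1 * sin a2 * cos a3, - (cos a1 * cos a2 * sin a3)).

Definition schmidt_coeffs (a1 a2 a3 : R) : list R :=
  Cmod (zeta0 a1 a2 a3) :: Cmod (zeta1 a1 a2 a3) ::
  Cmod (zeta2 a1 a2 a3) :: Cmod (zeta3 a1 a2 a3) :: nil.

Definition same_schmidt (a1 a2 a3 b1 b2 b3 : R) : Prop :=
  Permutation (schmidt_coeffs a1 a2 a3) (schmidt_coeffs b1 b2 b3).

(* Main.v *)
Require Import Defs.
From Stdlib Require Import Reals List Permutation Sorting Lra Psatz.
From Coquelicot Require Import Coquelicot.
Open Scope R_scope.

Lemma perm_sorted_eq : forall l l' : list R, Permutation l l' ->
  StronglySorted Rge l -> StronglySorted Rge l' -> l = l'.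
Proof.
  induction l as [|a l IH]; intros l' HP H1 H2.
  - symmetry; now apply Permutation_nil.
  - destruct l' as [|b l'].
    + apply Permutation_sym in HP; apply Permutation_nil in HP; discriminate.
    + apply StronglySorted_inv in H1 as [H1a H1b].
      apply StronglySorted_inv in H2 as [H2a H2b].
      assert (Hab : a = b).
      { assert (Ha : In a (b :: l')) by (eapply Permutation_in; eauto; left; auto).
        assert (Hb : In b (a :: l)) by (eapply Permutation_in; [apply Permutation_sym; eauto|left; auto]).
        destruct Ha as [Ha|Ha]; [auto|].
        destruct Hb as [Hb|Hb]; [auto|].
        rewrite Forall_forall in H1b, H2b.
        specialize (H1b _ Hb); specialize (H2b _ Ha); lra. }
      subst b. f_equal. apply IH; auto. eapply Permutation_cons_inv; eauto.
Qed.

Definition G0 x1 x2 x3 := (1 + x1*x2 + x1*x3 + x2*x3)/4.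
Definition G1 x1 x2 x3 := (1 + x2*x3 - x1*x2 - x1*x3)/4.
Definition G2 x1 x2 x3 := (1 + x1*x3 - x1*x2 - x2*x3)/4.
Definition G3 x1 x2 x3 := (1 + x1*x2 - x1*x3 - x2*x3)/4.

Lemma sq a : sin a ^ 2 = 1 - cos a ^ 2.
Proof. pose proof (sin2 a). unfold Rsqr in H. lra. Qed.

Lemma c2 a : cos (2 * a) = 2 * cos a ^ 2 - 1.
Proof. rewrite cos_2a_cos. ring. Qed.

Lemma sc_eq a1 a2 a3 : schmidt_coeffs a1 a2 a3 =
  let x1 := cos (2*a1) in let x2 := cos (2*a2) in let x3 := cos (2*a3) in
  sqrt (G0 x1 x2 x3) :: sqrt (G1 x1 x2 x3) :: sqrt (G2 x1 x2 x3) :: sqrt (G3 x1 x2 x3) :: nil.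
Proof.
  unfold schmidt_coeffs, zeta0, zeta1, zeta2, zeta3, Cmod, G0, G1, G2, G3; simpl fst; simpl snd.
  rewrite !c2.
  pose proof (sq a1); pose proof (sq a2); pose proof (sq a3).
  set (s1 := sin a1) in *; set (s2 := sin a2) in *; set (s3 := sin a3) in *.
  set (k1 := cos a1) in *; set (k2 := cos a2) in *; set (k3 := cos a3) in *.
  f_equal; [|f_equal; [|f_equal; [|f_equal]]]; f_equal.
  - replace ((-(s1*s2*s3))^2) with (s1^2*s2^2*s3^2) by ring.
    replace ((k1*k2*k3)^2) with (k1^2*k2^2*k3^2) by ring.
    rewrite H, H0, H1. field.
  - replace ((-(s1*k2*k3))^2) with (s1^2*k2^2*k3^2) by ring.
    replace ((k1*s2*s3)^2) with (k1^2*s2^2*s3^2) by ring.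
    rewrite H, H0, H1. field.
  - replace ((-(k1*s2*k3))^2) with (k1^2*s2^2*k3^2) by ring.
    replace ((s1*k2*s3)^2) with (s1^2*k2^2*s3^2) by ring.
    rewrite H, H0, H1. field.
  - replace ((-(k1*k2*s3))^2) with (k1^2*k2^2*s3^2) by ring.
    replace ((s1*s2*k3)^2) with (s1^2*s2^2*k3^2) by ring.
    rewrite H, H0, H1. field.
Qed.

Lemma xs a1 a2 a3 : 0 <= a3 -> a3 <= a2 -> a2 <= a1 -> a1 <= PI / 4 ->
  0 <= cos (2*a1) /\ cos (2*a1) <= cos (2*a2) /\ cos (2*a2) <= cos (2*a3) /\ cos (2*a3) <= 1.
Proof.
  intros. pose proof PI_RGT_0.
  split; [apply cos_ge_0; lra|].
  split; [apply cos_decr_1; lra|].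
  split; [apply cos_decr_1; lra|].
  apply COS_bound.
Qed.

Lemma Gnn x1 x2 x3 : 0 <= x1 -> x1 <= x2 -> x2 <= x3 -> x3 <= 1 ->
  0 <= G3 x1 x2 x3 /\ G3 x1 x2 x3 <= G2 x1 x2 x3 /\ G2 x1 x2 x3 <= G1 x1 x2 x3
  /\ G1 x1 x2 x3 <= G0 x1 x2 x3.
Proof.
  intros. unfold G0, G1, G2, G3.
  assert (0 <= (1-x1)*(1-x2)*(1+x3)).
  { apply Rmult_le_pos; [apply Rmult_le_pos|]; lra. }
  assert (0 <= (1+x1)*(1+x2)*(1-x3)).
  { apply Rmult_le_pos; [apply Rmult_le_pos|]; lra. }
  assert (x1*x2 <= x1*x3) by (apply Rmult_le_compat_l; lra).
  assert (x1*x3 <= x2*x3) by (apply Rmult_le_compat_r; lra).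
  assert (0 <= x1*x2) by (apply Rmult_le_pos; lra).
  repeat split; lra.
Qed.

Lemma sorted_sc a1 a2 a3 : 0 <= a3 -> a3 <= a2 -> a2 <= a1 -> a1 <= PI / 4 ->
  StronglySorted Rge (schmidt_coeffs a1 a2 a3).
Proof.
  intros. rewrite sc_eq. cbv zeta.
  destruct (xs a1 a2 a3) as (? & ? & ? & ?); auto.
  destruct (Gnn (cos (2*a1)) (cos (2*a2)) (cos (2*a3))) as (? & ? & ? & ?); auto.
  set (x1 := cos (2*a1)) in *; set (x2 := cos (2*a2)) in *; set (x3 := cos (2*a3)) in *.
  pose proof (sqrt_le_1_alt _ _ H8). pose proof (sqrt_le_1_alt _ _ H9).
  pose proof (sqrt_le_1_alt _ _ H10).
  repeat first [apply SSorted_nil | apply SSorted_cons | apply Forall_nil | apply Forall_cons | lra].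
Qed.

Lemma alg x1 x2 x3 y1 y2 y3 :
  0 <= x1 -> x1 <= x2 -> x2 <= x3 -> 0 <= y1 -> y1 <= y2 -> y2 <= y3 ->
  x1*x2 = y1*y2 -> x1*x3 = y1*y3 -> x2*x3 = y2*y3 ->
  (x1 = y1 /\ x2 = y2 /\ x3 = y3) \/ (x1 = 0 /\ y1 = 0).
Proof.
  intros.
  destruct (Req_dec x1 0) as [Hx|Hx].
  - right. split; auto. subst x1.
    assert (y1*y2 = 0) by lra.
    apply Rmult_integral in H8 as [|]; lra.
  - left.
    assert (Hy : y1 <> 0).
    { intro; subst y1. assert (x1*x2 = 0) by lra.
      apply Rmult_integral in H8 as [|]; lra. }
    assert (x1 > 0) by lra. assert (y1 > 0) by lra.
    assert (x2 > 0) by lra. assert (x3 > 0) by lra.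
    assert (y2 > 0) by lra. assert (y3 > 0) by lra.
    assert (E : x1*x1 = y1*y1).
    { apply Rmult_eq_reg_r with (x2*x3); [|nra].
      transitivity ((x1*x2)*(x1*x3)); [ring|]. rewrite H5, H6, H7. ring. }
    assert (x1 = y1) by nra. subst y1.
    assert (x2 = y2) by (apply Rmult_eq_reg_l with x1; lra).
    assert (x3 = y3) by (apply Rmult_eq_reg_l with x1; lra).
    auto.
Qed.

Lemma cinj a b : 0 <= a <= PI/4 -> 0 <= b <= PI/4 -> cos (2*a) = cos (2*b) -> a = b.
Proof.
  intros. pose proof PI_RGT_0.
  assert (2*a = 2*b) by (apply cos_inj; auto; lra). lra.
Qed.

Theorem lemma10 (a1 a2 a3 b1 b2 b3 : R) :
  0 <= a3 -> a3 <= a2 -> a2 <= a1 -> a1 <= PI / 4 ->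
  0 <= b3 -> b3 <= b2 -> b2 <= b1 -> b1 <= PI / 4 ->
  (same_schmidt a1 a2 a3 b1 b2 b3 <->
   ((a1 = b1 /\ a2 = b2 /\ a3 = b3) \/
    (a1 = PI / 4 /\ b1 = PI / 4 /\
     cos (2 * a2) * cos (2 * a3) = cos (2 * b2) * cos (2 * b3)))).
Proof.
  intros. unfold same_schmidt. pose proof PI_RGT_0. split.
  - intro HP. apply perm_sorted_eq in HP; try apply sorted_sc; auto.
    rewrite !sc_eq in HP. cbv zeta in HP.
    destruct (xs a1 a2 a3) as (? & ? & ? & ?); auto.
    destruct (xs b1 b2 b3) as (? & ? & ? & ?); auto.
    destruct (Gnn (cos (2*a1)) (cos (2*a2)) (cos (2*a3))) as (? & ? & ? & ?); auto.
    destruct (Gnn (cos (2*b1)) (cos (2*b2)) (cos (2*b3))) as (? & ? & ? & ?); auto.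
    injection HP; intros E3 E2 E1 E0.
    apply sqrt_inj in E0; try lra.
    apply sqrt_inj in E1; try lra.
    apply sqrt_inj in E2; try lra.
    apply sqrt_inj in E3; try lra.
    unfold G0, G1, G2, G3 in *.
    destruct (alg (cos (2*a1)) (cos (2*a2)) (cos (2*a3)) (cos (2*b1)) (cos (2*b2)) (cos (2*b3)))
      as [(F1 & F2 & F3)|(F1 & F2)]; auto; try lra.
    + left. repeat split; apply cinj; auto; lra.
    + right. rewrite <- cos_PI2 in F1, F2.
      split; [|split]; try lra.
      * assert (2*a1 = PI/2) by (apply cos_inj; auto; lra). lra.
      * assert (2*b1 = PI/2) by (apply cos_inj; auto; lra). lra.
  - intros [(-> & -> & ->)|(Ha & Hb & Hc)]; [apply Permutation_refl|].
    rewrite !sc_eq. cbv zeta. rewrite Ha, Hb.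
    unfold G0, G1, G2, G3.
    replace (2*(PI/4)) with (PI/2) by field. rewrite cos_PI2, Hc.
    replace (0 * cos (2*a2)) with (0 * cos (2*b2)) by ring.
    replace (0 * cos (2*a3)) with (0 * cos (2*b3)) by ring.
    apply Permutation_refl.
Qed.
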